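(* Let $A$ be an effect on a complex separable Hilbert space $\mathcal{H}$, $A'=I-A$, and define $\mathfrak{W}(\sigma_A):=\|A\|+\|A'\|-1$ and $\mathfrak{D}(\sigma_A):=\|AA'\|+\|I-AA'\|-1$. Then: (a) $0\le\mathfrak{W}(\sigma_A)-\mathfrak{D}(\sigma_A)\le1$; (b) $\mathfrak{W}(\sigma_A)-\mathfrak{D}(\sigma_A)=0$ if and only if $A$ is trivial; (c) $\mathfrak{W}(\sigma_A)-\mathfrak{D}(\sigma_A)=1$ if and only if $A$ is a nontrivial projection.
   Context: An effect is a selfadjoint bounded operator $A$ with $\mathbb{O}\le A\le I$; it is trivial if $A=\lambda I$ for some $\lambda\in[0,1]$; a nontrivial projection is a projection $P=P^2=P^*$ with $P\ne\mathbb{O},I$. Norms are operator norms. *)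

(* Defs.v *)
From HB Require Import structures.
From mathcomp Require Import all_boot all_order all_algebra.
From mathcomp Require Import complex.
From mathcomp Require Import boolp classical_sets reals.
Set Implicit Arguments. Unset Strict Implicit. Unset Printing Implicit Defensive.
Import Order.TTheory GRing.Theory Num.Theory.
Local Open Scope classical_set_scope.
Local Open Scope ring_scope.

Section Hilbert.
Variables (R : realType) (H : lmodType R[i]) (ip : H -> H -> R[i]).

Definition inner_product_axioms : Prop :=
  [/\ forall (a : R[i]) x y z, ip (a *: x + y) z = a * ip x z + ip y z,
      forall x y, ip y x = (ip x y)^*,
      forall x, 0 <= ip x x
    & forall x, ip x x = 0 -> x = 0].

Definition hnorm (x : H) : R := Num.sqrt (complex.Re (ip x x)).

Definition hcomplete : Prop :=
  forall u : nat -> H,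
    (forall e : R, 0 < e -> exists N, forall m n, (N <= m)%N -> (N <= n)%N ->
        hnorm (u m - u n) < e) ->
    exists l : H, forall e : R, 0 < e -> exists N, forall n, (N <= n)%N ->
        hnorm (u n - l) < e.

Definition hseparable : Prop :=
  exists d : nat -> H, forall x e, 0 < e -> exists n, hnorm (x - d n) < e.

Definition separable_hilbert : Prop :=
  [/\ inner_product_axioms, hcomplete & hseparable].

Definition bounded_op (A : H -> H) : Prop :=
  linear A /\ exists M : R, forall x, hnorm (A x) <= M * hnorm x.

Definition opnorm (A : H -> H) : R :=
  sup [set hnorm (A x) | x in [set x | hnorm x <= 1]].

Definition selfadjoint (A : H -> H) : Prop :=
  forall x y, ip (A x) y = ip x (A y).

Definition effect (A : H -> H) : Prop :=
  [/\ bounded_op A, selfadjoint A &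
      forall x, 0 <= ip (A x) x /\ ip (A x) x <= ip x x].

Definition trivial_effect (A : H -> H) : Prop :=
  exists l : R, 0 <= l <= 1 /\ forall x, A x = (Complex l 0) *: x.

Definition nontrivial_projection (A : H -> H) : Prop :=
  [/\ bounded_op A, forall x, A (A x) = A x, selfadjoint A,
      A <> (fun _ => 0) & A <> id].

Definition compl_op (A : H -> H) : H -> H := fun x => x - A x.
Definition comp_op (A B : H -> H) : H -> H := fun x => A (B x).
Definition id_op : H -> H := fun x => x.

Definition Wcoh (A : H -> H) : R := opnorm A + opnorm (compl_op A) - 1.
Definition Dcoh (A : H -> H) : R :=
  opnorm (comp_op A (compl_op A)) + opnorm (compl_op (comp_op A (compl_op A))) - 1.

End Hilbert.

(* Main.v *)
Require Import Defs.
From HB Require Import structures.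
From mathcomp Require Import all_boot all_order all_algebra.
From mathcomp Require Import complex.
From mathcomp Require Import boolp classical_sets reals.
From mathcomp Require Import ring lra.
Import Order.TTheory GRing.Theory Num.Theory.
Local Open Scope classical_set_scope.
Local Open Scope ring_scope.

Lemma key (R : realType) (m M : R) : 0 <= m -> m < M -> M <= 1 ->
  exists c d, [/\ 0 <= c, d <= 1, c - d < M - m &
    forall a b n : R, 0 <= n -> m * n <= a -> a <= M * n ->
      b <= (m + M) * a - m * M * n -> (forall t, 2 * t * a - t * t * n <= b) ->
      a - b <= c * n /\ d * n <= a - b].
Proof.
move=> m0 mM M1.
set h : R := 2^-1.
have h2 : 2 * h = 1 by rewrite mulfV // pnatr_eq0.
have hp : 0 < h by rewrite invr_gt0 ltr0n.
pose c := if 2 * M <= 1 then M - M * M else if 1 <= 2 * m then m - m * m else h * h.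
pose d := if m + M <= 1 then m - m * m else M - M * M.
exists c, d; split.
- rewrite /c; case: ifP => _; first nra. case: ifP => _; nra.
- rewrite /d; case: ifP => _; nra.
- rewrite /c /d; case: ifP => c1; case: ifP => c2; try case: ifP => c3; nra.
move=> a b n n0 ma aM bU bL; split.
- rewrite /c; case: ifP => c1.
    have := bL M; nra.
  case: ifP => c2.
    have := bL m; nra.
  have := bL h; nra.
- rewrite /d; case: ifP => c1; nra.
Qed.

Section Basics.
Variables (R : realType) (H : lmodType R[i]) (ip : H -> H -> R[i]).
Hypothesis hip : inner_product_axioms ip.

Definition Bf (x y : H) : R := complex.Re (ip x y).
Definition rc (r : R) : R[i] := Complex r 0.

Lemma ReM_rc (r : R) (z : R[i]) : complex.Re (rc r * z) = r * complex.Re z.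
Proof. case: z => a b /=. lra. Qed.

Lemma Re_conj (z : R[i]) : complex.Re (z^*) = complex.Re z.
Proof. by case: z. Qed.

Lemma ipDl x y z : ip (x + y) z = ip x z + ip y z.
Proof. move: hip => [h _ _ _]. by rewrite -(scale1r x) h mul1r scale1r. Qed.
Lemma ip0l z : ip 0 z = 0.
Proof. have := ipDl 0 0 z. rewrite addr0 => h. by apply: (addrI (ip 0 z)); rewrite addr0 -h. Qed.
Lemma ipZl a x z : ip (a *: x) z = a * ip x z.
Proof. move: hip => [h _ _ _]. by rewrite -(addr0 (a *: x)) h ip0l addr0. Qed.

Lemma BC x y : Bf x y = Bf y x.
Proof. move: hip => [_ h _ _]. by rewrite /Bf h Re_conj. Qed.
Lemma BDl x y z : Bf (x + y) z = Bf x z + Bf y z.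
Proof. by rewrite /Bf ipDl; case: (ip x z) => ? ?; case: (ip y z). Qed.
Lemma BDr x y z : Bf z (x + y) = Bf z x + Bf z y.
Proof. by rewrite BC BDl !(BC z). Qed.
Lemma BZl r x z : Bf (rc r *: x) z = r * Bf x z.
Proof. by rewrite /Bf ipZl ReM_rc. Qed.
Lemma BZr r x z : Bf z (rc r *: x) = r * Bf z x.
Proof. by rewrite BC BZl BC. Qed.
Lemma BNl x z : Bf (- x) z = - Bf x z.
Proof. have e : rc (-1) = -1.
  by apply/eqP; rewrite eq_complex /= oppr0 !eqxx.
 have -> : - x = rc (-1) *: x by rewrite e scaleN1r.
 by rewrite BZl mulN1r. Qed.
Lemma BNr x z : Bf z (- x) = - Bf z x.
Proof. by rewrite BC BNl BC. Qed.
Lemma B0l z : Bf 0 z = 0.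
Proof. by rewrite /Bf ip0l. Qed.
Lemma B0r z : Bf z 0 = 0.
Proof. by rewrite BC B0l. Qed.

Lemma Bxx_ge0 x : 0 <= Bf x x.
Proof. move: hip => [_ _ h _]. by have := h x; rewrite lecE => /andP[_]. Qed.
Lemma Bxx_eq0 x : Bf x x = 0 -> x = 0.
Proof. move: hip => [_ _ h1 h2] e. apply: h2. have := h1 x; rewrite lecE /= => /andP[/eqP hi _].
 move: e; rewrite /Bf. case: (ip x x) hi => a b /= -> ->. done. Qed.

Lemma hnormE x : hnorm ip x = Num.sqrt (Bf x x).
Proof. by []. Qed.
Lemma hnorm_sq x : hnorm ip x ^+ 2 = Bf x x.
Proof. by rewrite hnormE sqr_sqrtr // Bxx_ge0. Qed.
Lemma inball x : (hnorm ip x <= 1) = (Bf x x <= 1).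
Proof. by rewrite hnormE -{1}sqrtr1 ler_sqrt ?ler01. Qed.

Lemma rcM r s : rc r * rc s = rc (r * s).
Proof. by apply/eqP; rewrite eq_complex /= !mulr0 mul0r subr0 addr0 !eqxx. Qed.
Lemma rc1 : rc 1 = 1. Proof. by []. Qed.
Lemma rc0 : rc 0 = 0. Proof. by []. Qed.
Lemma scale_rc r s (x : H) : rc r *: (rc s *: x) = rc (r * s) *: x.
Proof. by rewrite scalerA rcM. Qed.

Definition lin (T : H -> H) := forall a u v, T (a *: u + v) = a *: T u + T v.
Definition sa (T : H -> H) := forall x y, Bf (T x) y = Bf x (T y).
Definition eff (T : H -> H) := [/\ lin T, sa T & forall x, 0 <= Bf (T x) x <= Bf x x].

Section LinT.
Variable T : H -> H.
Hypothesis hT : lin T.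
Lemma lin0 : T 0 = 0.
Proof. have := hT 1 0 0. rewrite scale1r addr0 scale1r => h.
 by apply: (addrI (T 0)); rewrite addr0 -h. Qed.
Lemma linD u v : T (u + v) = T u + T v.
Proof. by rewrite -(scale1r u) hT !scale1r. Qed.
Lemma linZ a u : T (a *: u) = a *: T u.
Proof. by rewrite -(addr0 (a *: u)) hT lin0 addr0. Qed.
Lemma linN u : T (- u) = - T u.
Proof. by rewrite -scaleN1r linZ scaleN1r. Qed.
Lemma linB u v : T (u - v) = T u - T v.
Proof. by rewrite linD linN. Qed.
End LinT.

Lemma posCS T k : lin T -> sa T -> (forall z, 0 <= Bf (T z) z) ->
  (forall z, Bf (T z) z <= k * Bf z z) -> 0 < k ->
  forall x, Bf (T x) (T x) <= k * Bf (T x) x.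
Proof.
move=> lT sT pos up kp x.
set t := k^-1.
have tk : t * k = 1 by rewrite mulVf // gt_eqF.
have tp : 0 < t by rewrite invr_gt0.
have h := pos (x - rc t *: T x).
rewrite (linB _ lT) (linZ _ lT) !(BDl, BDr, BNl, BNr, BZl, BZr) in h.
have e1 : Bf (T (T x)) x = Bf (T x) (T x) by rewrite sT.
have e2 : Bf x (T x) = Bf (T x) x by rewrite BC.
have g := up (T x).
have b0 := Bxx_ge0 (T x).
rewrite e1 in h.
set al := Bf (T x) x in h *; set be := Bf (T x) (T x) in h g b0 *;
set ga := Bf (T (T x)) (T x) in h g *.
have h2 : t * t * ga <= t * be.
  have : t * t * ga <= t * t * (k * be) by rewrite ler_pM2l ?mulr_gt0.
  have -> // : t * t * (k * be) = t * be by rewrite -!mulrA (mulrA t k) tk mul1r.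
have h3 : t * be <= al by nra.
have : k * (t * be) <= k * al by rewrite ler_pM2l.
by rewrite mulrA (mulrC k t) tk mul1r.
Qed.

Definition ball := [set x : H | hnorm ip x <= 1].
Definition Sup (f : H -> R) := sup [set f x | x in ball].

Lemma ball0 : ball 0.
Proof. by rewrite /ball /= inball B0l ler01. Qed.

Lemma Sup_le f c : (forall x, Bf x x <= 1 -> f x <= c) -> Sup f <= c.
Proof.
move=> h; apply: ge_sup; first by exists (f 0), 0 => //; exact: ball0.
by move=> _ [x + <-]; rewrite /ball /= inball; apply: h.
Qed.

Lemma le_Sup f c x : (forall y, Bf y y <= 1 -> f y <= c) -> Bf x x <= 1 -> f x <= Sup f.
Proof.
move=> h hx; apply: sup_upper_bound; last by exists x => //; rewrite /ball /= inball.
split; first by exists (f 0), 0 => //; exact: ball0.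
by exists c => _ [y + <-]; rewrite /ball /= inball; apply: h.
Qed.

Lemma scale_bound (f : H -> R) c :
  (forall r x, f (rc r *: x) = r * (r * f x)) ->
  (forall x, Bf x x <= 1 -> f x <= c) -> forall x, f x <= c * Bf x x.
Proof.
move=> hom h x.
have [e|ne] := eqVneq (Bf x x) 0.
  rewrite (Bxx_eq0 _ e). rewrite B0l mulr0.
  by rewrite -(scale0r (0:H)) -rc0 hom mul0r.
have np : 0 < Bf x x by rewrite lt0r ne Bxx_ge0.
set s := Num.sqrt (Bf x x).
have sp : 0 < s by rewrite sqrtr_gt0.
have ss : s * s = Bf x x by rewrite -expr2 sqr_sqrtr // ltW.
set r := s^-1.
have rs : r * s = 1 by rewrite mulVf // gt_eqF.
have hb : Bf (rc r *: x) (rc r *: x) = 1.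
  rewrite BZl BZr -ss.
  have -> : r * (r * (s * s)) = (r * s) * (r * s) by ring.
  by rewrite rs mul1r.
have := h (rc r *: x); rewrite hb lexx => /(_ isT).
rewrite hom => hr.
have : s * s * (r * (r * f x)) <= s * s * c by rewrite ler_pM2l ?mulr_gt0.
have -> : s * s * (r * (r * f x)) = f x.
  have -> : s * s * (r * (r * f x)) = (r * s) * (r * s) * f x by ring.
  by rewrite rs !mul1r.
by rewrite ss mulrC.
Qed.

Lemma Q_hom T : lin T -> forall r x, Bf (T (rc r *: x)) (rc r *: x) = r * (r * Bf (T x) x).
Proof. by move=> lT r x; rewrite (linZ _ lT) BZl BZr mulrCA. Qed.

Lemma sqrt_le_q (v q : R) : 0 <= q -> v <= q * q -> Num.sqrt v <= q.
Proof.
move=> q0 h. have <- : Num.sqrt (q * q) = q by rewrite -expr2 sqrtr_sqr ger0_norm.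
by rewrite ler_wsqrtr.
Qed.

Lemma opnorm_eff T : eff T -> opnorm ip T = Sup (fun x => Bf (T x) x).
Proof.
case=> lT sT hb.
set q := Sup _.
have Qb1 : forall y, Bf y y <= 1 -> Bf (T y) y <= 1.
  by move=> y hy; case/andP: (hb y) => _ h; apply: le_trans hy.
have q0 : 0 <= q.
  have := le_Sup _ _ 0 Qb1; rewrite B0l ler01 (lin0 _ lT) B0l; exact.
have qb := scale_bound _ _ (Q_hom _ lT) (fun x hx => le_Sup _ _ _ Qb1 hx).
have nT : forall x, Bf x x <= 1 -> Bf (T x) (T x) <= q * q.
  move=> x hx.
  have hx0 := Bxx_ge0 x.
  case/andP: (hb x) => p0 _.
  have [qp|] := ltP 0 q.
    have := posCS _ _ lT sT (fun z => proj1 (andP (hb z))) qb qp x.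
    move=> h; apply: le_trans h _; rewrite ler_pM2l //.
    by apply: le_trans (qb x) _; rewrite -[X in _ <= X]mulr1 ler_wpM2l.
  move=> qle; have qz : q = 0 by apply/le_anti; rewrite qle q0.
  have Qz : Bf (T x) x = 0 by apply/le_anti; rewrite p0 andbT; move: (qb x); rewrite -/q qz mul0r.
  have := posCS _ 1 lT sT (fun z => proj1 (andP (hb z))) _ ltr01 x.
  rewrite Qz mulr0 qz mul0r; apply.
  by move=> z; rewrite mul1r; case/andP: (hb z).
have hnT : forall x, Bf x x <= 1 -> hnorm ip (T x) <= q.
  by move=> x hx; rewrite hnormE; apply: sqrt_le_q => //; apply: nT.
apply/le_anti/andP; split.
  by apply: Sup_le.
apply: Sup_le => x hx.
have : hnorm ip (T x) <= opnorm ip T by apply: (le_Sup (fun x => hnorm ip (T x)) q).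
apply: le_trans.
set h := hnorm ip (T x).
have hh : h * h = Bf (T x) (T x) by rewrite -expr2 hnorm_sq.
have h0 : 0 <= h by rewrite /h hnormE sqrtr_ge0.
have := Bxx_ge0 (T x - rc h *: x).
rewrite !(BDl, BDr, BNl, BNr, BZl, BZr) (BC x (T x)) -hh => H0.
have [hp|] := ltP 0 h.
  have hx0 := Bxx_ge0 x.
  nra.
move=> hle; have hz : h = 0 by apply/le_anti; rewrite hle h0.
have : Bf (T x) (T x) = 0 by rewrite -hh hz mul0r.
by move/Bxx_eq0 => ->; rewrite B0l hz.
Qed.

Lemma normalize x : x != 0 -> exists r, Bf (rc r *: x) (rc r *: x) = 1.
Proof.
move=> nx.
have np : 0 < Bf x x by rewrite lt0r Bxx_ge0 andbT; apply: contra nx => /eqP/Bxx_eq0 ->.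
set s := Num.sqrt (Bf x x).
have sp : 0 < s by rewrite sqrtr_gt0.
have ss : s * s = Bf x x by rewrite -expr2 sqr_sqrtr // ltW.
exists s^-1.
rewrite BZl BZr -ss.
have -> : s^-1 * (s^-1 * (s * s)) = (s^-1 * s) * (s^-1 * s) by ring.
by rewrite mulVf ?mul1r // gt_eqF.
Qed.

Lemma Sup_const f c : (exists u, Bf u u = 1) -> (forall x, Bf x x <= 1 -> f x <= c) ->
  (exists2 u, Bf u u <= 1 & f u = c) -> Sup f = c.
Proof.
move=> _ h [u hu fu]; apply/le_anti/andP; split; first exact: Sup_le.
by rewrite -fu; apply: (le_Sup _ c).
Qed.

Lemma eff_of_effect A : effect ip A -> eff A.
Proof.
case=> [[lA _] sA hA]; split.
- by move=> a u v; apply: lA.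
- by move=> x y; rewrite /Bf sA.
- move=> x; case: (hA x); rewrite !lecE /= => /andP[_ h1] /andP[_ h2].
  by rewrite /Bf h1 h2.
Qed.

Lemma Qc T x : Bf (compl_op T x) x = Bf x x - Bf (T x) x.
Proof. by rewrite /compl_op BDl BNl. Qed.

Lemma eff_compl T : eff T -> eff (compl_op T).
Proof.
case=> lT sT hT; split.
- move=> a u v; rewrite /compl_op lT. rewrite scalerBr.
  by rewrite -!addrA; congr (_ + _); rewrite addrCA opprD addrA.
- by move=> x y; rewrite /compl_op BDl BDr BNl BNr sT.
- move=> x; rewrite Qc; case/andP: (hT x) => h1 h2.
  by rewrite subr_ge0 h2 lerBlDr lerDl h1.
Qed.

Lemma Qp A x : lin A -> sa A ->
  Bf (comp_op A (compl_op A) x) x = Bf (A x) x - Bf (A x) (A x).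
Proof. by move=> lA sA; rewrite /comp_op /compl_op (linB _ lA) BDl BNl (sA (A x) x). Qed.

Lemma eff_prod A : eff A -> eff (comp_op A (compl_op A)).
Proof.
move=> eA; have [lA sA hA] := eA; have [lA' _ _] := eff_compl _ eA; split.
- by move=> a u v; rewrite /comp_op lA' lA.
- move=> x y; rewrite /comp_op /compl_op !(linB _ lA) BDl BDr BNl BNr.
  by rewrite sA (sA (A x)) (sA x).
- move=> x; rewrite Qp //.
  have up : forall z, Bf (A z) z <= 1 * Bf z z.
    by move=> z; rewrite mul1r; case/andP: (hA z).
  have := posCS _ 1 lA sA (fun z => proj1 (andP (hA z))) up ltr01 x.
  rewrite mul1r.
  have := Bxx_ge0 (A x).
  case/andP: (hA x) => h1 h2 b0 h3.
  rewrite subr_ge0 h3 /=.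
  by apply: le_trans h2; rewrite lerBlDr lerDl.
Qed.

Definition shift (A : H -> H) (m : R) : H -> H := fun x => A x - rc m *: x.

Lemma shift_lin A m : lin A -> lin (shift A m).
Proof.
move=> lA a u v; rewrite /shift lA scalerDr !scalerA (mulrC (rc m) a) -scalerA.
by rewrite scalerBr -!addrA; congr (_ + _); rewrite addrCA opprD addrA.
Qed.

Lemma shift_sa A m : sa A -> sa (shift A m).
Proof. by move=> sA x y; rewrite /shift BDl BDr BNl BNr BZl BZr sA. Qed.

Lemma Qshift A m x : Bf (shift A m x) x = Bf (A x) x - m * Bf x x.
Proof. by rewrite /shift BDl BNl BZl. Qed.

Lemma Nshift A m x : Bf (shift A m x) (shift A m x) =
  Bf (A x) (A x) - 2 * m * Bf (A x) x + m * m * Bf x x.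
Proof.
rewrite /shift !(BDl, BDr, BNl, BNr, BZl, BZr) (BC x (A x)).
ring.
Qed.

Lemma Sup_cn f c : (exists u, Bf u u = 1) -> 0 <= c ->
  (forall x, f x = c * Bf x x) -> Sup f = c.
Proof.
move=> [u hu] c0 hf; apply/le_anti/andP; split.
  apply: Sup_le => x hx; rewrite hf; rewrite -[X in _ <= X]mulr1; exact: ler_wpM2l.
have e : f u = c by rewrite hf hu mulr1.
rewrite -{1}e; apply: (le_Sup f c u); last by rewrite hu.
by move=> y hy; rewrite hf; rewrite -[X in _ <= X]mulr1; exact: ler_wpM2l.
Qed.

Lemma Sup0 T : lin T -> (forall x : H, x = 0) -> Sup (fun x => Bf (T x) x) = 0.
Proof.
move=> lT triv; apply/le_anti/andP; split.
  by apply: Sup_le => x _; rewrite (triv x) B0r.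
have e : Bf (T 0) 0 = 0 by rewrite B0r.
rewrite -{1}e; apply: (le_Sup (fun x => Bf (T x) x) 0 0).
  by move=> y _; rewrite (triv y) B0r.
by rewrite B0l ler01.
Qed.

Lemma eff_Sup_le1 T : eff T -> Sup (fun x => Bf (T x) x) <= 1.
Proof. by case=> _ _ h; apply: Sup_le => x hx; case/andP: (h x) => _ h2; apply: le_trans hx. Qed.

Lemma eff_le_Sup T : eff T -> forall x, Bf x x <= 1 -> Bf (T x) x <= Sup (fun x => Bf (T x) x).
Proof.
case=> _ _ h x hx; apply: (le_Sup (fun x => Bf (T x) x) 1 x) => // y hy.
by case/andP: (h y) => _ h2; apply: le_trans hy.
Qed.

Lemma eff_Sup_ge0 T : eff T -> 0 <= Sup (fun x => Bf (T x) x).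
Proof.
move=> eT; have [lT _ _] := eT; have := eff_le_Sup _ eT 0.
by rewrite (lin0 _ lT) B0l ler01; apply.
Qed.

Lemma eff_bound T : eff T -> forall x, Bf (T x) x <= Sup (fun x => Bf (T x) x) * Bf x x.
Proof.
move=> eT; have [lT _ _] := eT.
exact: scale_bound _ _ (Q_hom _ lT) (eff_le_Sup _ eT).
Qed.

Lemma main_sec A (hA : effect ip A) :
  [/\ 0 <= Wcoh ip A - Dcoh ip A <= 1,
      Wcoh ip A - Dcoh ip A = 0 <-> trivial_effect A
    & Wcoh ip A - Dcoh ip A = 1 <-> nontrivial_projection ip A].
Proof.
have eA := eff_of_effect _ hA.
have [lA sA hA'] := eA.
have eA' := eff_compl _ eA.
have eB := eff_prod _ eA.
have eB' := eff_compl _ eB.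
rewrite /Wcoh /Dcoh !opnorm_eff //.
set B := comp_op A (compl_op A).
have qA' : forall x, Bf (compl_op A x) x = Bf x x - Bf (A x) x by move=> x; rewrite Qc.
have qB : forall x, Bf (B x) x = Bf (A x) x - Bf (A x) (A x) by move=> x; rewrite Qp.
have qB' : forall x, Bf (compl_op B x) x = Bf x x - (Bf (A x) x - Bf (A x) (A x)).
  by move=> x; rewrite Qc qB.
have [triv|[u hu]] : (forall x : H, x = 0) \/ exists u, Bf u u = 1.
  case: (pselect (exists x : H, x != 0)) => [[x nx]|nex]; last first.
    by left=> x; apply/eqP; apply: contra_notT nex => nx; exists x.
  by right; have [r hr] := normalize _ nx; exists (rc r *: x).
  have [lA' _ _] := eA'; have [lB _ _] := eB; have [lB' _ _] := eB'.
  rewrite (Sup0 _ lA triv) (Sup0 _ lA' triv) (Sup0 _ lB triv) (Sup0 _ lB' triv) subrr.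
  split.
  - by rewrite lexx ler01.
  - split=> // _; exists 0; split; first by rewrite lexx ler01.
    by move=> x; rewrite (triv x) (lin0 _ lA) scaler0.
  - split=> [/eqP|]; first by rewrite eq_sym oner_eq0.
    case=> _ _ _ hne _; exfalso; apply: hne; apply: funext => x.
    by rewrite (triv x) (lin0 _ lA).
have [lA' sA'0 _] := eA'; have [lB sB _] := eB.
set M := Sup (fun x => Bf (A x) x).
set Sx := Sup (fun x => Bf (compl_op A x) x).
set P := Sup (fun x => Bf (B x) x).
set U := Sup (fun x => Bf (compl_op B x) x).
have M1 : M <= 1 := eff_Sup_le1 _ eA.
have S1 : Sx <= 1 := eff_Sup_le1 _ eA'.
have P1 : P <= 1 := eff_Sup_le1 _ eB.
have U1 : U <= 1 := eff_Sup_le1 _ eB'.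
have M0 : 0 <= M := eff_Sup_ge0 _ eA.
have S0 : 0 <= Sx := eff_Sup_ge0 _ eA'.
have P0 : 0 <= P := eff_Sup_ge0 _ eB.
have U0 : 0 <= U := eff_Sup_ge0 _ eB'.
have hu1 : Bf u u <= 1 by rewrite hu.
have aM : forall x, Bf (A x) x <= M * Bf x x := eff_bound _ eA.
set m := 1 - Sx.
have am : forall x, m * Bf x x <= Bf (A x) x.
  move=> x; have := eff_bound _ eA' x; rewrite qA' -/Sx /m => h; nra.
have m0 : 0 <= m by rewrite /m subr_ge0.
have mM : m <= M.
  have := eff_le_Sup _ eA u hu1; have := eff_le_Sup _ eA' u hu1.
  rewrite -/M -/Sx qA' hu /m; lra.
have WE : M + Sx - 1 = M - m by rewrite /m; ring.
have D0 : 1 <= P + U.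
  have := eff_le_Sup _ eB u hu1; have := eff_le_Sup _ eB' u hu1.
  rewrite -/P -/U qB' qB hu; lra.
have triv_WD : trivial_effect A -> M + Sx - 1 = 0 /\ P + U - 1 = 0.
  case=> l [/andP[l0 l1] hl].
  have hl' : forall x, A x = rc l *: x by [].
  have ea : forall x, Bf (A x) x = l * Bf x x by move=> x; rewrite hl' BZl.
  have eb : forall x, Bf (A x) (A x) = l * (l * Bf x x) by move=> x; rewrite hl' BZl BZr.
  have eM : M = l by apply: Sup_cn => //; exists u.
  have eS : Sx = 1 - l.
    apply: Sup_cn; [by exists u | by rewrite subr_ge0 | ].
    by move=> x; rewrite qA' ea; ring.
  have eP : P = l - l * l.
    apply: Sup_cn; [by exists u | nra | ].
    by move=> x; rewrite qB ea eb; ring.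
  have eU : U = 1 - (l - l * l).
    apply: Sup_cn; [by exists u | nra | ].
    by move=> x; rewrite qB' ea eb; ring.
  rewrite eM eS eP eU; split; ring.
have mM_triv : m = M -> trivial_effect A.
  move=> eqm; exists m; split; first by rewrite m0 /= eqm.
  move=> x.
  have lT := shift_lin _ m lA; have sT := shift_sa _ m sA.
  have pos : forall z, 0 <= Bf (shift A m z) z.
    by move=> z; rewrite Qshift subr_ge0.
  have up : forall z, Bf (shift A m z) z <= 1 * Bf z z.
    move=> z; rewrite Qshift mul1r.
    have := aM z; have := am z; have := Bxx_ge0 z; rewrite -eqm; nra.
  have := posCS _ 1 lT sT pos up ltr01 x.
  have -> : Bf (shift A m x) x = 0.
    rewrite Qshift; have := aM x; have := am x; rewrite -eqm; lra.
  rewrite mulr0 => h.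
  have : Bf (shift A m x) (shift A m x) = 0.
    by apply/le_anti; rewrite h Bxx_ge0.
  by move/Bxx_eq0; rewrite /shift => /eqP; rewrite subr_eq0 => /eqP.
have strict : m < M -> P + U - 1 < M + Sx - 1.
  move=> mlt.
  have [c [d [c0 d1 cd hcd]]] := key _ _ _ m0 mlt M1.
  have pt : forall x, Bf (A x) x - Bf (A x) (A x) <= c * Bf x x /\
                      d * Bf x x <= Bf (A x) x - Bf (A x) (A x).
    move=> x; apply: hcd; [exact: Bxx_ge0 | exact: am | exact: aM | | ].
    + have lT := shift_lin _ m lA; have sT := shift_sa _ m sA.
      have pos : forall z, 0 <= Bf (shift A m z) z.
        by move=> z; rewrite Qshift subr_ge0.
      have up : forall z, Bf (shift A m z) z <= (M - m) * Bf z z.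
        move=> z; rewrite Qshift.
        have := aM z; lra.
      have := posCS _ (M - m) lT sT pos up _ x.
      rewrite subr_gt0 => /(_ mlt).
      rewrite Nshift Qshift; nra.
    + move=> t; have := Bxx_ge0 (shift A t x); rewrite Nshift; lra.
  have hP : P <= c.
    apply: Sup_le => x hx; rewrite qB; case: (pt x) => h _.
    apply: le_trans h _; rewrite -[X in _ <= X]mulr1; exact: ler_wpM2l.
  have hU : U <= 1 - d.
    apply: Sup_le => x hx; rewrite qB'; case: (pt x) => _ h.
    have : (1 - d) * Bf x x <= 1 - d.
      by rewrite -[X in _ <= X]mulr1; apply: ler_wpM2l; rewrite ?subr_ge0.
    lra.
  rewrite WE; lra.
have W1 : M + Sx - 1 <= 1 by rewrite WE; lra.
have proj_1 : nontrivial_projection ip A -> M + Sx - 1 - (P + U - 1) = 1.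
  case=> _ idem _ ne0 neid.
  have eb : forall x, Bf (A x) (A x) = Bf (A x) x by move=> x; rewrite -(sA (A x) x) idem.
  have eP : P = 0.
    apply: Sup_cn; [by exists u | by [] | ].
    by move=> x; rewrite qB eb subrr mul0r.
  have eU : U = 1.
    apply: Sup_cn; [by exists u | exact: ler01 | ].
    by move=> x; rewrite qB' eb subrr subr0 mul1r.
  have eM : M = 1.
    apply/le_anti; rewrite M1 /=.
    have [y ny] : exists y, A y != 0.
      apply: contra_notP ne0 => h; apply: funext => y; apply/eqP.
      by apply: contra_notT h => hy; exists y.
    have [r hr] := normalize _ ny.
    have hw : Bf (rc r *: A y) (rc r *: A y) <= 1 by rewrite hr.
    have := eff_le_Sup _ eA _ hw.
    by rewrite (linZ _ lA) idem hr.
  have eS : Sx = 1.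
    apply/le_anti; rewrite S1 /=.
    have [y ny] : exists y, y - A y != 0.
      apply: contra_notP neid => h; apply: funext => y.
      have : y - A y == 0 by apply: contra_notT h => hy; exists y.
      by rewrite subr_eq0 => /eqP.
    have [r hr] := normalize _ ny.
    have hw : Bf (rc r *: (y - A y)) (rc r *: (y - A y)) <= 1 by rewrite hr.
    have := eff_le_Sup _ eA' _ hw.
    rewrite qA' (linZ _ lA) (linB _ lA) idem subrr scaler0 B0l subr0 hr; exact.
  rewrite eM eS eP eU; ring.
have [mlt|meq] : m < M \/ m = M.
  by move: mM; rewrite le_eqVlt => /orP[/eqP ->|->]; [right|left].
- split.
  + have := strict mlt; lra.
  + split=> [h|/triv_WD [e1 e2]]; last by rewrite e1 e2 subrr.
    by have := strict mlt; lra.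
  + split; last by move/proj_1.
    move=> h.
    have eM : M = 1 by lra.
    have eS : Sx = 1 by lra.
    have hUS : Sx <= U.
      apply: Sup_le => x hx; rewrite qA'.
      have := eff_le_Sup _ eB' x hx; rewrite -/U qB'.
      have := Bxx_ge0 (A x); lra.
    have eP : P = 0 by lra.
    have Bx0 : forall x, B x = 0.
      move=> x.
      have [_ _ hBc] := eB.
      have up : forall z, Bf (B z) z <= 1 * Bf z z.
        by move=> z; rewrite mul1r; case/andP: (hBc z).
      have := posCS _ 1 lB sB (fun z => proj1 (andP (hBc z))) up ltr01 x.
      have := eff_bound _ eB x; rewrite -/P eP mul0r => hq.
      case/andP: (hBc x) => hq0 _.
      have -> : Bf (B x) x = 0 by apply/le_anti; rewrite hq hq0.
      rewrite mulr0 => hb.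
      by apply: Bxx_eq0; apply/le_anti; rewrite hb Bxx_ge0.
    case: hA => bA saA _; split => //.
    * move=> x; have := Bx0 x; rewrite /B /comp_op /compl_op (linB _ lA).
      by move/eqP; rewrite subr_eq0 => /eqP <-.
    * move=> e0.
      have : M <= 0 by apply: Sup_le => x _; rewrite e0 B0l.
      lra.
    * move=> e1.
      have : Sx <= 0 by apply: Sup_le => x _; rewrite qA' e1 subrr.
      lra.
- have [e1 e2] := triv_WD (mM_triv meq).
  rewrite e1 e2 subrr; split.
  + by rewrite lexx ler01.
  + by split=> // _; apply: mM_triv.
  + split=> [/eqP|/proj_1]; first by rewrite eq_sym oner_eq0.
    by rewrite e1 e2 subrr => /eqP; rewrite eq_sym oner_eq0.
Qed.

End Basics.

Theorem mainTheorem9 (R : realType) (H : lmodType R[i]) (ip : H -> H -> R[i])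
  (hH : separable_hilbert ip) (A : H -> H) (hA : effect ip A) :
  [/\ 0 <= Wcoh ip A - Dcoh ip A <= 1,
      Wcoh ip A - Dcoh ip A = 0 <-> trivial_effect A
    & Wcoh ip A - Dcoh ip A = 1 <-> nontrivial_projection ip A].
Proof.
case: hH => hip _ _.
exact: main_sec hip A hA.
Qed.
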